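(* Let $A,Y\in\{0,1\}$ and let $R,R'\in[0,1]$ be random variables on the same probability space, with $\Pr\{A=a,Y=y\}>0$ for all $a,y$. Fix $a\in\{0,1\}$. Then for any point $p$ on the $A$-conditional ROC curve $\{C_a^R(t):t\in[0,1]\}$ of $R$, there is a point $q$ on the corresponding $A$-conditional ROC curve $\{C_a^{R'}(t):t\in[0,1]\}$ of $R'$ such that $\|p-q\|_2\le\sqrt{2}\cdot d_{\mathrm{K}}(R,R')$.
   Context: For a score $S\in[0,1]$ and $a\in\{0,1\}$, the $A$-conditional ROC curve is $C_a^S(t)=\left(\Pr\{S>t\mid A=a,Y=0\},\ \Pr\{S>t\mid A=a,Y=1\}\right)$, $t\in[0,1]$. The conditional Kolmogorov distance is $d_{\mathrm{K}}(R,R')=\max_{a,y\in\{0,1\}}\sup_{t\in[0,1]}\left|\Pr\{R>t\mid A=a,Y=y\}-\Pr\{R'>t\mid A=a,Y=y\}\right|$. *)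

(* Defs.v *)
From HB Require Import structures.
From mathcomp Require Import all_boot all_order all_algebra.
From mathcomp Require Import all_classical all_reals all_analysis.
Set Implicit Arguments. Unset Strict Implicit. Unset Printing Implicit Defensive.
Import Order.TTheory GRing.Theory Num.Theory.
Import numFieldNormedType.Exports.
Local Open Scope classical_set_scope.
Local Open Scope ring_scope.

Definition evAY {T : Type} (A Y : T -> bool) (a y : bool) : set T :=
  [set x | A x = a /\ Y x = y].

Definition cprob_gt {d : measure_display} {T : measurableType d} {R : realType}
  (P : probability T R) (A Y : T -> bool) (S : T -> R) (t : R) (a y : bool) : R :=
  fine (P ([set x | t < S x] `&` evAY A Y a y)) / fine (P (evAY A Y a y)).

Definition roc {d : measure_display} {T : measurableType d} {R : realType}
  (P : probability T R) (A Y : T -> bool) (S : T -> R) (a : bool) (t : R) : R * R :=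
  (cprob_gt P A Y S t a false, cprob_gt P A Y S t a true).

Definition sup_diff {d : measure_display} {T : measurableType d} {R : realType}
  (P : probability T R) (A Y : T -> bool) (S S' : T -> R) (a y : bool) : R :=
  sup [set r : R | exists2 t : R, t \in `[0, 1] &
        r = `|cprob_gt P A Y S t a y - cprob_gt P A Y S' t a y| ].

Definition dK {d : measure_display} {T : measurableType d} {R : realType}
  (P : probability T R) (A Y : T -> bool) (S S' : T -> R) : R :=
  Num.max (Num.max (sup_diff P A Y S S' false false) (sup_diff P A Y S S' false true))
          (Num.max (sup_diff P A Y S S' true false) (sup_diff P A Y S S' true true)).

Definition dist2 {R : realType} (p q : R * R) : R :=
  Num.sqrt ((p.1 - q.1) ^+ 2 + (p.2 - q.2) ^+ 2).

(* Main.v *)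
Require Import Defs.
From HB Require Import structures.
From mathcomp Require Import all_boot all_order all_algebra.
From mathcomp Require Import all_classical all_reals all_analysis.
From mathcomp Require Import lra.
Import Order.TTheory GRing.Theory Num.Theory.
Import numFieldNormedType.Exports.
Local Open Scope classical_set_scope.
Local Open Scope ring_scope.

Lemma cprob01 (d : measure_display) (T : measurableType d) (R : realType)
  (P : probability T R) (A Y : T -> bool) (S : T -> R)
  (mA : forall b : bool, measurable [set x | A x = b])
  (mY : forall b : bool, measurable [set x | Y x = b])
  (mS : measurable_fun setT S)
  (pos : forall a y : bool, (0 < P (evAY A Y a y))%E) t a y :
  0 <= cprob_gt P A Y S t a y <= 1.
Proof.
have mev : measurable (evAY A Y a y).
  have -> : evAY A Y a y = [set x | A x = a] `&` [set x | Y x = y] by [].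
  exact: measurableI.
have mX : measurable ([set x | t < S x] `&` evAY A Y a y).
  apply: measurableI => //.
  have := mS measurableT _ (measurable_itv `]t, +oo[).
  rewrite setTI; congr measurable; apply/seteqP; split => x /=; rewrite in_itv /= andbT //.
have h0 := pos a y.
have h1 : (P (evAY A Y a y) <= 1)%E by apply: probability_le1.
have hX0 : (0 <= P ([set x | (t < S x)%R] `&` evAY A Y a y))%E by apply: measure_ge0.
have hX : (P ([set x | (t < S x)%R] `&` evAY A Y a y) <= P (evAY A Y a y))%E.
  by apply: le_measure => //; rewrite inE.
have fe : P (evAY A Y a y) \is a fin_num.
  by rewrite ge0_fin_numE ?(ltW h0) // (le_lt_trans h1) // ltry.
have fX : P ([set x | t < S x] `&` evAY A Y a y) \is a fin_num.
  by rewrite ge0_fin_numE // (le_lt_trans hX) // (le_lt_trans h1) // ltry.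
have dp : 0 < fine (P (evAY A Y a y)) by rewrite fine_gt0 // h0 /= (le_lt_trans h1) // ltry.
rewrite /cprob_gt; apply/andP; split.
  by rewrite divr_ge0 ?(ltW dp) //; apply: fine_ge0.
by rewrite ler_pdivrMr // mul1r fine_le.
Qed.

Theorem lemma5p5 (d : measure_display) (T : measurableType d) (R : realType)
  (P : probability T R) (A Y : T -> bool) (S S' : T -> R)
  (mA : forall b : bool, measurable [set x | A x = b])
  (mY : forall b : bool, measurable [set x | Y x = b])
  (mS : measurable_fun setT S) (mS' : measurable_fun setT S')
  (S01 : forall x, S x \in `[0, 1]) (S'01 : forall x, S' x \in `[0, 1])
  (pos : forall a y : bool, (0 < P (evAY A Y a y))%E)
  (a : bool) (p : R * R) :
  (exists2 t : R, t \in `[0, 1] & p = roc P A Y S a t) ->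
  exists2 q : R * R, (exists2 t' : R, t' \in `[0, 1] & q = roc P A Y S' a t') &
    dist2 p q <= Num.sqrt 2 * dK P A Y S S'.
Proof.
move=> [t t01 ->]; exists (roc P A Y S' a t); first by exists t.
have key : forall y, `|cprob_gt P A Y S t a y - cprob_gt P A Y S' t a y|
    <= sup_diff P A Y S S' a y.
  move=> y; apply: ub_le_sup; last by exists t.
  exists 2 => r [u _ ->].
  have /andP[h1 h2] := @cprob01 _ _ _ P A Y S mA mY mS pos u a y.
  have /andP[h3 h4] := @cprob01 _ _ _ P A Y S' mA mY mS' pos u a y.
  rewrite ler_norml; apply/andP; split; lra.
set D := dK P A Y S S'.
have hD : forall y, sup_diff P A Y S S' a y <= D.
  by move=> y; rewrite /D /dK; case: a {key}; case: y;
    rewrite ?le_max ?lexx ?orbT.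
have k0 := le_trans (key false) (hD false).
have k1 := le_trans (key true) (hD true).
have D0 : 0 <= D by apply: le_trans k0.
rewrite /dist2 /roc /=.
set x := _ - _ in k0 *; set z := _ - _ in k1 *.
have -> : Num.sqrt 2 * D = Num.sqrt (2 * D ^+ 2).
  by rewrite sqrtrM ?ler0n // sqrtr_sqr ger0_norm.
apply: ler_wsqrtr.
have ex : x ^+ 2 <= D ^+ 2 by rewrite -real_normK ?num_real // lerXn2r ?nnegrE.
have ez : z ^+ 2 <= D ^+ 2 by rewrite -real_normK ?num_real // lerXn2r ?nnegrE.
by rewrite mulr_natl mulr2n; apply: lerD.
Qed.
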